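(* Let $n=m=1$ (scalars $A\neq0$, $B\neq0$, $Q,R>0$) in the setting of the context, and assume $q<q_c$. Then the stability threshold satisfies $$\bar\delta(q)\ge\frac{Q(R+B^2P)}{A^2B^2P^2}+\frac{(1-q)R}{R+B^2P},$$ where $P>0$ solves $P=Q+A^2P-(1-q)(R+B^2P)^{-1}A^2B^2P^2$.
   Context: Let $A\in\mathbb{R}^{n\times n}$, $B\in\mathbb{R}^{n\times m}$ with $(A,B)$ stabilizable, and let $Q$, $R$ be symmetric positive definite. Let $q\in(0,1)$ be the loss probability of $x_{t+1}=Ax_t+\lambda_tBu_t$ with i.i.d. $\lambda_t$, $\mathcal P(\lambda_t=0)=q$. For $p\in[0,1)$ the modified Riccati equation with parameter $p$ is $X=Q+A^\top XA-(1-p)A^\top XB(R+B^\top XB)^{-1}B^\top XA$; $q_c$ is the critical loss probability such that for every $p\in[0,q_c)$ this equation has a unique positive definite solution. For $\hat q\in[0,q_c)$ let $\hat P$ be the positive definite solution for parameter $\hat q$ and $\hat K=-(R+B^\top\hat PB)^{-1}B^\top\hat PA$. Define $\mathcal C(q,\hat q)=Q+(1-q)\hat K^\top R\hat K-(q-\hat q)A^\top\hat PB(R+B^\top\hat PB)^{-1}B^\top\hat PA$ and the stability threshold $\bar\delta(q)=\sup\{\delta\ge0:\ \mathcal C(q,\hat q)\succ0 \text{ for all } \hat q\in[0,q_c)\text{ with } q-\hat q<\delta\}$ (possibly $+\infty$). *)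

(* Defs.v *)
From HB Require Import structures.
From mathcomp Require Import all_boot all_order all_algebra.
From mathcomp Require Import all_classical all_reals all_analysis.
Set Implicit Arguments. Unset Strict Implicit. Unset Printing Implicit Defensive.
Import Order.TTheory GRing.Theory Num.Theory.
Local Open Scope classical_set_scope.
Local Open Scope ring_scope.

(* Scalar modified Riccati equation with parameter p:
   X = Q + A X A - (1-p) A X B (Rw + B X B)^-1 B X A. *)
Definition mre (R : realType) (A B Q Rw p X : R) : Prop :=
  X = Q + A ^+ 2 * X - (1 - p) * (A ^+ 2 * B ^+ 2 * X ^+ 2) / (Rw + B ^+ 2 * X).

Definition mre_unique_pos (R : realType) (A B Q Rw p : R) : Prop :=
  exists! X : R, 0 < X /\ mre A B Q Rw p X.

Definition qcrit (R : realType) (A B Q Rw : R) : R :=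
  sup [set c : R | 0 <= c <= 1 /\
        forall p : R, 0 <= p < c -> mre_unique_pos A B Q Rw p].

Definition Khat (R : realType) (A B Rw Ph : R) : R :=
  - (B * Ph * A) / (Rw + B ^+ 2 * Ph).

Definition Ccal (R : realType) (A B Q Rw q qh Ph : R) : R :=
  Q + (1 - q) * (Khat A B Rw Ph ^+ 2 * Rw)
    - (q - qh) * (A ^+ 2 * B ^+ 2 * Ph ^+ 2) / (Rw + B ^+ 2 * Ph).

Definition delta_bar (R : realType) (A B Q Rw q : R) : \bar R :=
  ereal_sup [set d%:E | d in [set d : R | 0 <= d /\
      forall qh Ph : R, 0 <= qh -> qh < qcrit A B Q Rw ->
        0 < Ph -> mre A B Q Rw qh Ph ->
        q - qh < d -> 0 < Ccal A B Q Rw q qh Ph]].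

(* Main.v *)
Require Import Defs.
From HB Require Import structures.
From mathcomp Require Import all_boot all_order all_algebra.
From mathcomp Require Import all_classical all_reals all_analysis.
From mathcomp.algebra_tactics Require Import ring lra.
Import Order.TTheory GRing.Theory Num.Theory.
Local Open Scope classical_set_scope.
Local Open Scope ring_scope.

Section S.
Variable R : realType.
Variables A B Q Rw : R.
Hypotheses (hA : A != 0) (hB : B != 0) (hQ : 0 < Q) (hR : 0 < Rw).

Definition hq (p X : R) := B ^+ 2 * (1 - p * A ^+ 2) * X ^+ 2
  + (Rw * (1 - A ^+ 2) - Q * B ^+ 2) * X - Q * Rw.

Lemma A2pos : 0 < A ^+ 2. Proof. by rewrite exprn_even_gt0. Qed.
Lemma B2pos : 0 < B ^+ 2. Proof. by rewrite exprn_even_gt0. Qed.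

Lemma mre_hq p X : 0 < X -> mre A B Q Rw p X -> hq p X = 0.
Proof.
move=> X0 E; rewrite /mre in E.
have S0 : Rw + B ^+ 2 * X != 0.
  by rewrite gt_eqF // ltr_wpDr // mulr_ge0 // ltW // B2pos.
have tS : (1 - p) * (A ^+ 2 * B ^+ 2 * X ^+ 2) / (Rw + B ^+ 2 * X) * (Rw + B ^+ 2 * X)
   = (1 - p) * (A ^+ 2 * B ^+ 2 * X ^+ 2) by rewrite divfK.
move: tS; move: ((1 - p) * (A ^+ 2 * B ^+ 2 * X ^+ 2) / (Rw + B ^+ 2 * X)) E => t E tS.
have H : X - Q - A ^+ 2 * X + t = 0 by rewrite {1}E; ring.
have -> : hq p X = (X - Q - A ^+ 2 * X + t) * (Rw + B ^+ 2 * X).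
  rewrite mulrDl tS /hq; ring.
by rewrite H mul0r.
Qed.

Lemma hq_mre p X : 0 < X -> hq p X = 0 -> mre A B Q Rw p X.
Proof.
move=> X0 E.
have S0 : Rw + B ^+ 2 * X != 0.
  by rewrite gt_eqF // ltr_wpDr // mulr_ge0 // ltW // B2pos.
have H : (1 - p) * (A ^+ 2 * B ^+ 2 * X ^+ 2) = - (X - Q - A ^+ 2 * X) * (Rw + B ^+ 2 * X).
  apply/eqP; rewrite -subr_eq0; apply/eqP; rewrite -E /hq; ring.
rewrite /mre H mulfK //; ring.
Qed.

Lemma double p : B ^+ 2 * (1 - p * A ^+ 2) < 0 -> mre_unique_pos A B Q Rw p ->
  (Rw * (1 - A ^+ 2) - Q * B ^+ 2) ^+ 2 = - 4 * Q * Rw * (B ^+ 2 * (1 - p * A ^+ 2)).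
Proof.
set a := B ^+ 2 * _; set b := _ - _.
move=> a0 [X [[X0 EX] U]].
have h := mre_hq p X X0 EX; rewrite /hq -/a -/b in h.
have a0' : a != 0 by rewrite lt_eqF.
have X0' : X != 0 by rewrite gt_eqF.
pose Y := (Q * Rw) / (- a * X).
have aX : 0 < - a * X by rewrite mulr_gt0 // oppr_gt0.
have Y0 : 0 < Y by rewrite /Y divr_gt0 // mulr_gt0.
have hY : hq p Y = 0.
  rewrite /hq -/a -/b /Y.
  have -> : b = (Q * Rw - a * X ^+ 2) / X.
    apply: (mulIf X0'); rewrite divfK //; apply/eqP; rewrite -subr_eq0 -h; apply/eqP; ring.
  by field; rewrite X0' a0'.
have YX : Y = X by apply/esym/U; split => //; apply: hq_mre.
have e1 : a * X ^+ 2 = - (Q * Rw).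
  have e0 : Y * (- a * X) = Q * Rw by rewrite /Y divfK // gt_eqF.
  rewrite YX in e0; rewrite -e0; ring.
have e2 : b * X = 2 * (Q * Rw).
  apply/eqP; rewrite -subr_eq0; apply/eqP.
  have -> : b * X - 2 * (Q * Rw) = (a * X ^+ 2 + b * X - Q * Rw) - (a * X ^+ 2 + Q * Rw) by ring.
  by rewrite h e1; ring.
apply: (mulIf (expf_neq0 2 X0')).
have -> : b ^+ 2 * X ^+ 2 = (b * X) ^+ 2 by ring.
have -> : - 4 * Q * Rw * a * X ^+ 2 = - 4 * Q * Rw * (a * X ^+ 2) by ring.
rewrite e1 e2; ring.
Qed.

Lemma mono q qh P Ph : qh < q -> 0 < P -> 0 < Ph ->
  mre A B Q Rw q P -> mre A B Q Rw qh Ph -> 0 <= B ^+ 2 * (1 - q * A ^+ 2) -> Ph <= P.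
Proof.
move=> qq P0 Ph0 EP EPh a0.
have h1 := mre_hq q P P0 EP; have h2 := mre_hq qh Ph Ph0 EPh.
move: h1 h2; rewrite /hq.
set a := B ^+ 2 * (1 - q * A ^+ 2); set b := Rw * (1 - A ^+ 2) - Q * B ^+ 2.
move=> h1 h2.
have h3 : a * Ph ^+ 2 + b * Ph - Q * Rw = - ((q - qh) * (A ^+ 2 * B ^+ 2 * Ph ^+ 2)).
  rewrite -[RHS]add0r -{1}h2 /a /b; ring.
have h4 : a * Ph ^+ 2 + b * Ph - Q * Rw <= 0.
  rewrite h3 oppr_le0; apply: mulr_ge0; first by rewrite subr_ge0 ltW.
  by apply: mulr_ge0; [apply: mulr_ge0|]; apply: sqr_ge0.
rewrite leNgt; apply/negP => PPh.
have QR : 0 < Q * Rw by rewrite mulr_gt0.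
have e : (a * P + b) * P = Q * Rw.
  apply/eqP; rewrite -subr_eq0 -h1; apply/eqP; ring.
have aPb : 0 < a * P + b.
  by move: QR; rewrite -e pmulr_lgt0.
have : 0 < (Ph - P) * (a * (Ph + P) + b).
  rewrite mulr_gt0 // ?subr_gt0 //.
  by have : 0 <= a * Ph by [apply: mulr_ge0 => //; apply: ltW]; rewrite mulrDr; lra.
have -> : (Ph - P) * (a * (Ph + P) + b) = a * Ph ^+ 2 + b * Ph - Q * Rw - (a * P ^+ 2 + b * P - Q * Rw) by ring.
by rewrite h1 subr0 ltNge h4.
Qed.

Definition ff q X := Q * (Rw + B ^+ 2 * X) / (A ^+ 2 * B ^+ 2 * X ^+ 2)
  + (1 - q) * Rw / (Rw + B ^+ 2 * X).

Lemma ff_pos q X : q < 1 -> 0 < X -> 0 < ff q X.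
Proof.
move=> q1 X0; have S0 : 0 < Rw + B ^+ 2 * X by rewrite ltr_wpDr // mulr_ge0 // ltW // B2pos.
have u0 : 0 < A ^+ 2 * B ^+ 2 by apply: mulr_gt0; [exact: A2pos | exact: B2pos].
have X2 : 0 < X ^+ 2 by apply: exprn_gt0.
rewrite /ff; apply: addr_gt0; apply: divr_gt0 => //; try apply: mulr_gt0 => //.
by rewrite subr_gt0.
Qed.

Lemma ff_mono q X Y : q < 1 -> 0 < X -> X <= Y -> ff q Y <= ff q X.
Proof.
move=> q1 X0 XY; have Y0 : 0 < Y by apply: lt_le_trans XY.
have SX : 0 < Rw + B ^+ 2 * X by rewrite ltr_wpDr // mulr_ge0 // ltW // B2pos.
have SY : 0 < Rw + B ^+ 2 * Y by rewrite ltr_wpDr // mulr_ge0 // ltW // B2pos.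
have u0' : 0 < A ^+ 2 * B ^+ 2 by apply: mulr_gt0; [exact: A2pos | exact: B2pos].
have u0 : A ^+ 2 * B ^+ 2 != 0 by rewrite gt_eqF.
have E Z : 0 < Z -> Q * (Rw + B ^+ 2 * Z) / (A ^+ 2 * B ^+ 2 * Z ^+ 2)
   = Q / (A ^+ 2 * B ^+ 2) * (Rw * (Z^-1) ^+ 2 + B ^+ 2 * Z^-1).
  by move=> Z0; field; rewrite hA hB gt_eqF.
have iXY : Y^-1 <= X^-1 by rewrite lef_pV2 ?posrE.
have iY : 0 <= Y^-1 by rewrite invr_ge0 ltW.
rewrite /ff (E X) // (E Y) //; apply: lerD.
  apply: ler_wpM2l; first by rewrite divr_ge0 ?ltW.
  apply: lerD; last by rewrite ler_wpM2l // ltW // B2pos.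
  by apply: ler_wpM2l; [exact: ltW | rewrite !expr2; apply: ler_pM].
apply: ler_wpM2l; first by apply: mulr_ge0; [rewrite subr_ge0 ltW | exact: ltW].
by rewrite lef_pV2 ?posrE // lerD2l; apply: ler_wpM2l => //; apply: ltW; exact: B2pos.
Qed.

End S.

Theorem theorem4 (R : realType) (A B Q Rw q P : R) :
  A != 0 -> B != 0 -> 0 < Q -> 0 < Rw ->
  0 < q -> q < 1 -> q < qcrit A B Q Rw ->
  0 < P -> mre A B Q Rw q P ->
  (((Q * (Rw + B ^+ 2 * P)) / (A ^+ 2 * B ^+ 2 * P ^+ 2)
     + (1 - q) * Rw / (Rw + B ^+ 2 * P))%:E <= delta_bar A B Q Rw q)%E.
Proof.
move=> hA hB hQ hR q0 q1 qc P0 EP.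
pose Sset := [set c : R | 0 <= c <= 1 /\ forall p : R, 0 <= p < c -> mre_unique_pos A B Q Rw p].
have qc' : q < sup Sset := qc.
have ne : Sset !=set0.
  apply/set0P/eqP => E; move: qc'; rewrite E sup0 => /lt_trans /(_ q0).
  by rewrite ltxx.
case: (sup_gt ne qc') => c [_ Hc] qcl.
have aq : 0 <= B ^+ 2 * (1 - q * A ^+ 2).
  rewrite leNgt; apply/negP => aneg.
  have an p : q < p -> B ^+ 2 * (1 - p * A ^+ 2) < 0.
    move=> qp.
    have -> : B ^+ 2 * (1 - p * A ^+ 2) = B ^+ 2 * (1 - q * A ^+ 2) - B ^+ 2 * A ^+ 2 * (p - q) by ring.
    have : 0 < B ^+ 2 * A ^+ 2 * (p - q).
      by apply: mulr_gt0; [apply: mulr_gt0; [exact: B2pos|exact: A2pos] | rewrite subr_gt0].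
    move: aneg; lra.
  pose p1 := (q + c) / 2; pose p2 := (p1 + c) / 2.
  have h1 : q < p1 < c by rewrite /p1; apply/andP; split; lra.
  have h2 : p1 < p2 < c by rewrite /p2; apply/andP; split; move/andP: h1 => [? ?]; lra.
  move/andP: h1 => [h1a h1b]; move/andP: h2 => [h2a h2b].
  have E1 := double _ _ _ _ _ hB hQ hR _ (an p1 h1a) (Hc p1 (ltac:(apply/andP; split; lra))).
  have E2 := double _ _ _ _ _ hB hQ hR _ (an p2 (lt_trans h1a h2a)) (Hc p2 (ltac:(apply/andP; split; lra))).
  rewrite E1 in E2.
  have QR : -4 * Q * Rw != 0.
    by rewrite !mulf_neq0 // ?gt_eqF // oppr_eq0 pnatr_eq0.
  move: (mulfI QR E2) => /eqP; rewrite -subr_eq0.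
  have -> : B ^+ 2 * (1 - p1 * A ^+ 2) - B ^+ 2 * (1 - p2 * A ^+ 2) = B ^+ 2 * A ^+ 2 * (p2 - p1) by ring.
  rewrite !mulf_eq0 (negbTE hA) (negbTE hB) subr_eq0 /=.
  by rewrite gt_eqF.
apply: ereal_sup_ubound; exists (ff R A B Q Rw q P); last by [].
split; first exact/ltW/(ff_pos _ _ _ _ _ hA hB hQ hR _ _ q1 P0).
move=> qh Ph qh0 qhc Ph0 EPh dlt.
have S0 : 0 < Rw + B ^+ 2 * Ph by rewrite ltr_wpDr // mulr_ge0 // ltW // B2pos.
have u0 : 0 < A ^+ 2 * B ^+ 2 by apply: mulr_gt0; [exact: A2pos | exact: B2pos].
have X2 : 0 < Ph ^+ 2 by apply: exprn_gt0.
have -> : Ccal A B Q Rw q qh Ph = (A ^+ 2 * B ^+ 2 * Ph ^+ 2 / (Rw + B ^+ 2 * Ph)) * (ff R A B Q Rw q Ph - (q - qh)).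
  rewrite /Ccal /Khat /ff; field; rewrite hA hB !gt_eqF //.
apply: mulr_gt0; first by apply: divr_gt0 => //; apply: mulr_gt0.
rewrite subr_gt0.
case: (leP q qh) => qqh.
  by apply: le_lt_trans (ff_pos _ _ _ _ _ hA hB hQ hR _ _ q1 Ph0); rewrite subr_le0.
apply: (lt_le_trans dlt); apply: (ff_mono _ _ _ _ _ hA hB hQ hR) => //.
exact: (mono _ _ _ _ _ hB hQ hR _ _ _ _ qqh P0 Ph0 EP EPh aq).
Qed.
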